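(* Let $F \ge 3$ be an integer. The number of numerical semigroups with multiplicity $4$ and Frobenius number $F$ equals: $\left(\frac{F-1}{4}\right)^2$ if $F\equiv 1 \pmod 4$ and $5\le F\le 9$; $\frac{F^2-14F+141}{16}$ if $F\equiv 1\pmod 4$ and $13\le F\le 17$; $-\frac32\lfloor\frac{F+1}{12}\rfloor^2 + \frac14\lfloor\frac{F+1}{12}\rfloor F - \frac34\lfloor\frac{F+1}{12}\rfloor + \lfloor\frac{F+5}{8}\rfloor^2 - \frac14\lfloor\frac{F+5}{8}\rfloor F + \frac14\lfloor\frac{F+5}{8}\rfloor + \frac{5F}{16} - \frac{11}{32} + \frac{F^2}{32}$ if $F\equiv 1\pmod 4$ and $F\ge 21$; $\left(\frac F4 - \lfloor\frac{F+1}{8}\rfloor + \frac12\right)\left(\frac F4 - \lfloor\frac{F+5}{8}\rfloor + \frac12\right)$ if $F\equiv 2\pmod 4$; $\frac{F^2}{32} + \frac{7F}{16} - \frac{19}{32} + \frac34\lfloor\frac{F+1}{8}\rfloor + \lfloor\frac{F+1}{8}\rfloor^2 + \frac14\lfloor\frac{F}{12}\rfloor F - \frac94\lfloor\frac F{12}\rfloor - \frac32\lfloor\frac F{12}\rfloor^2 - \frac14\lfloor\frac{F+1}{8}\rfloor F$ if $F\equiv 3\pmod 4$; and $0$ otherwise.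
   Context: A numerical semigroup is a subset $S \subseteq \mathbb{N}$ containing $0$, closed under addition, with $\mathbb{N}\setminus S$ finite. Its multiplicity is $\min(S\setminus\{0\})$ and its Frobenius number is the largest integer not in $S$. *)

(* Defs.v *)
From HB Require Import structures.
From mathcomp Require Import all_boot all_order all_algebra.
From mathcomp Require Import boolp classical_sets cardinality.
Set Implicit Arguments. Unset Strict Implicit. Unset Printing Implicit Defensive.
Import Order.TTheory GRing.Theory Num.Theory.
Local Open Scope classical_set_scope.

Definition numerical_semigroup (S : set nat) : Prop :=
  S 0%N /\ (forall x y, S x -> S y -> S (x + y)%N) /\ finite_set (~` S).

Definition is_multiplicity (S : set nat) (m : nat) : Prop :=
  (0 < m)%N /\ S m /\ (forall x, (0 < x)%N -> S x -> (m <= x)%N).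

Definition is_frobenius (S : set nat) (f : nat) : Prop :=
  ~ S f /\ (forall x, ~ S x -> (x <= f)%N).

Definition NS_mult_frob (m f : nat) : set (set nat) :=
  [set S | numerical_semigroup S /\ is_multiplicity S m /\ is_frobenius S f].

Local Open Scope ring_scope.

Definition ns4_formula (F : nat) : rat :=
  let f : rat := F%:R in
  let a : rat := ((F + 1) %/ 12)%N%:R in
  let b : rat := ((F + 5) %/ 8)%N%:R in
  let c : rat := ((F + 1) %/ 8)%N%:R in
  let d : rat := (F %/ 12)%N%:R in
  if (F %% 4 == 1)%N then
    if (5 <= F <= 9)%N then ((f - 1) / 4) ^+ 2
    else if (13 <= F <= 17)%N then (f ^+ 2 - 14 * f + 141) / 16
    else if (21 <= F)%N then
      - (3/2) * a ^+ 2 + (1/4) * a * f - (3/4) * a + b ^+ 2 - (1/4) * b * f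
      + (1/4) * b + 5 * f / 16 - 11/32 + f ^+ 2 / 32
    else 0
  else if (F %% 4 == 2)%N then
    (f / 4 - c + 1/2) * (f / 4 - b + 1/2)
  else if (F %% 4 == 3)%N then
    f ^+ 2 / 32 + 7 * f / 16 - 19/32 + (3/4) * c + c ^+ 2 + (1/4) * d * f
    - (9/4) * d - (3/2) * d ^+ 2 - (1/4) * c * f
  else 0.

(* Main.v *)
Require Import Defs.
From HB Require Import structures.
From mathcomp Require Import all_boot all_order all_algebra.
From mathcomp Require Import boolp classical_sets cardinality.
From mathcomp Require Import zify ring lra.
Import Order.TTheory GRing.Theory Num.Theory.

Local Open Scope classical_set_scope.
Local Open Scope card_scope.

Definition mkSb (a b c : nat) (x : nat) : bool :=
  [|| x %% 4 == 0, (x %% 4 == 1) && (4 * a + 1 <= x),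
      (x %% 4 == 2) && (4 * b + 2 <= x) | (x %% 4 == 3) && (4 * c + 3 <= x)]%N.
Definition mkS (a b c : nat) : set nat := fun x => mkSb a b c x.

Definition kunz (a b c : nat) : bool :=
  [&& 1 <= a, 1 <= b, 1 <= c, b <= 2 * a, c <= a + b, b <= 2 * c + 1 & a <= b + c + 1]%N.

Definition Mx (a b c : nat) : nat := maxn (4 * a + 1) (maxn (4 * b + 2) (4 * c + 3)).

Lemma mkS_add a b c : kunz a b c -> forall x y, mkS a b c x -> mkS a b c y -> mkS a b c (x + y).
Proof. rewrite /kunz /mkS /mkSb => hk x y hx hy. lia. Qed.

Lemma mkS_ns a b c : kunz a b c -> numerical_semigroup (mkS a b c).
Proof.
move=> hk; split; first by rewrite /mkS /mkSb.
split; first exact: mkS_add.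
apply: (@sub_finite_set _ _ `I_(4 * (a + b + c) + 4)); last exact: finite_II.
move=> x /=; rewrite /mkS /mkSb => hx; apply: contrapT => hx2; apply: hx.
move: hx2; rewrite /= => hx2. lia.
Qed.

Lemma mkS_mult a b c : kunz a b c -> is_multiplicity (mkS a b c) 4.
Proof. rewrite /kunz /is_multiplicity /mkS /mkSb => hk; split => //; split => //. move=> x hx hS; lia. Qed.

Lemma mkS_frob a b c : kunz a b c -> is_frobenius (mkS a b c) (Mx a b c - 4).
Proof. rewrite /kunz /is_frobenius /mkS /mkSb /Mx => hk; split. lia. move=> x hx; lia. Qed.

Lemma mkS_inj a b c a' b' c' : mkS a b c = mkS a' b' c' -> [/\ a = a', b = b' & c = c'].
Proof.
move=> E.
have e x : mkSb a b c x = mkSb a' b' c' x.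
  have := congr1 (fun S => S x) E; rewrite /mkS /= => h.
  by apply/idP/idP => H; [rewrite -h | rewrite h].
have s1 : mkSb a' b' c' (4 * a + 1) by rewrite -e /mkSb; lia.
have s2 : mkSb a b c (4 * a' + 1) by rewrite e /mkSb; lia.
have s3 : mkSb a' b' c' (4 * b + 2) by rewrite -e /mkSb; lia.
have s4 : mkSb a b c (4 * b' + 2) by rewrite e /mkSb; lia.
have s5 : mkSb a' b' c' (4 * c + 3) by rewrite -e /mkSb; lia.
have s6 : mkSb a b c (4 * c' + 3) by rewrite e /mkSb; lia.
move: s1 s2 s3 s4 s5 s6; rewrite /mkSb => s1 s2 s3 s4 s5 s6.
have t1 : (a' <= a)%N by lia.
have t2 : (a <= a')%N by lia.
have t3 : (b' <= b)%N by lia.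
have t4 : (b <= b')%N by lia.
have t5 : (c' <= c)%N by lia.
have t6 : (c <= c')%N by lia.
split; lia.
Qed.

Lemma mult4 S : numerical_semigroup S -> S 4%N -> forall t, S (4 * t)%N.
Proof.
move=> [h0 [hadd _]] h4; elim=> [|t IH]; first by rewrite muln0.
by rewrite mulnSr; apply: hadd.
Qed.

Lemma class_exists S (i : nat) : numerical_semigroup S -> (i < 4)%N ->
  exists x, S x /\ (x %% 4 = i)%N.
Proof.
move=> [h0 [hadd hfin]] hi; apply: contrapT => hno.
have sub : (fun t => 4 * t + i)%N @` [set: nat] `<=` ~` S.
  move=> _ [t _ <-] /= hS; apply: hno; exists (4 * t + i)%N; split => //; lia.
have h1 : (fun t => 4 * t + i)%N @` [set: nat] #= [set: nat].
  by apply: inj_card_eq => x y _ _ /= e; lia.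
have : [set: nat] #<= ~` S.
  by rewrite -(card_le_eql h1); apply: subset_card_le.
by move/finite_setPn: hfin.
Qed.

Lemma class_min S (i : nat) : numerical_semigroup S -> (i < 4)%N ->
  exists w, [/\ S w, (w %% 4 = i)%N & forall x, S x -> (x %% 4 = i)%N -> (w <= x)%N].
Proof.
move=> hS hi.
have exP : exists n, (fun n => `[< S n >] && (n %% 4 == i)%N) n.
  have [x [hx1 hx2]] := class_exists S i hS hi; exists x; apply/andP; split.
    exact/asboolP.
  by apply/eqP.
case: (ex_minnP exP) => w /andP[/asboolP hw /eqP hwi] hmin.
exists w; split => // x hx hxi; apply: hmin; apply/andP; split; first exact/asboolP.
by apply/eqP.
Qed.

Lemma NS_to_kunz S : numerical_semigroup S -> is_multiplicity S 4 ->
  exists a b c, kunz a b c /\ S = mkS a b c.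
Proof.
move=> hS [_ [h4 hm]].
have [hS0 [hadd _]] := hS.
have m4 := mult4 S hS h4.
have [w1 [S1 c1 m1]] := class_min S 1 hS isT.
have [w2 [S2 c2 m2]] := class_min S 2 hS isT.
have [w3 [S3 c3 m3]] := class_min S 3 hS isT.
have g1 : (4 <= w1)%N by apply: hm => //; lia.
have g2 : (4 <= w2)%N by apply: hm => //; lia.
have g3 : (4 <= w3)%N by apply: hm => //; lia.
have E : S = mkS (w1 %/ 4) (w2 %/ 4) (w3 %/ 4).
  apply/funext => x; apply/propext; rewrite /mkS /mkSb; split.
    move=> hx.
    have r := ltn_pmod x (isT : (0 < 4)%N).
    have i1 : (x %% 4 = 1)%N -> (w1 <= x)%N by apply: m1.
    have i2 : (x %% 4 = 2)%N -> (w2 <= x)%N by apply: m2.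
    have i3 : (x %% 4 = 3)%N -> (w3 <= x)%N by apply: m3.
    lia.
  move=> hx.
  have r := ltn_pmod x (isT : (0 < 4)%N).
  case/orP: hx => [hx|]; first by have -> : x = (4 * (x %/ 4))%N by lia.
  case/orP => [hx|].
    have -> : x = (w1 + 4 * ((x - w1) %/ 4))%N by lia.
    by apply: hadd.
  case/orP => [hx|hx].
    have -> : x = (w2 + 4 * ((x - w2) %/ 4))%N by lia.
    by apply: hadd.
  have -> : x = (w3 + 4 * ((x - w3) %/ 4))%N by lia.
  by apply: hadd.
exists (w1 %/ 4), (w2 %/ 4), (w3 %/ 4); split => //.
have k1 : mkS (w1 %/ 4) (w2 %/ 4) (w3 %/ 4) (w1 + w1)%N by rewrite -E; apply: hadd.
have k2 : mkS (w1 %/ 4) (w2 %/ 4) (w3 %/ 4) (w1 + w2)%N by rewrite -E; apply: hadd.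
have k3 : mkS (w1 %/ 4) (w2 %/ 4) (w3 %/ 4) (w3 + w3)%N by rewrite -E; apply: hadd.
have k4 : mkS (w1 %/ 4) (w2 %/ 4) (w3 %/ 4) (w2 + w3)%N by rewrite -E; apply: hadd.
move: k1 k2 k3 k4; rewrite /mkS /mkSb /kunz => k1 k2 k3 k4.
have q1 : (1 <= w1 %/ 4)%N by lia.
have q2 : (1 <= w2 %/ 4)%N by lia.
have q3 : (1 <= w3 %/ 4)%N by lia.
have q4 : (w2 %/ 4 <= 2 * (w1 %/ 4))%N by lia.
have q5 : (w3 %/ 4 <= w1 %/ 4 + w2 %/ 4)%N by lia.
have q6 : (w2 %/ 4 <= 2 * (w3 %/ 4) + 1)%N by lia.
have q7 : (w1 %/ 4 <= w2 %/ 4 + w3 %/ 4 + 1)%N by lia.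
by rewrite q1 q2 q3 q4 q5 q6 q7.
Qed.

Lemma frob_uniq S f g : is_frobenius S f -> is_frobenius S g -> f = g.
Proof. move=> [f1 f2] [g1 g2]; apply/eqP; rewrite eqn_leq (g2 _ f1) (f2 _ g1) //. Qed.

Definition trip (N : nat) : seq (nat * nat * nat) :=
  [seq (x, z) | x <- [seq (u, v) | u <- iota 0 N, v <- iota 0 N], z <- iota 0 N].

Definition valid (F : nat) (t : nat * nat * nat) : bool :=
  kunz t.1.1 t.1.2 t.2 && (Mx t.1.1 t.1.2 t.2 == F + 4)%N.

Definition TT (F : nat) := [seq t <- trip (F + 1) | valid F t].

Definition mkS3 (t : nat * nat * nat) := mkS t.1.1 t.1.2 t.2.

Lemma uniq_trip N : uniq (trip N).
Proof.
rewrite /trip; apply: allpairs_uniq; last by move=> [? ?] [? ?] _ _ [-> ->].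
  apply: allpairs_uniq; try exact: iota_uniq.
  by move=> [? ?] [? ?] _ _ [-> ->].
exact: iota_uniq.
Qed.

Lemma mem_trip N a b c : ((a, b, c) \in trip N) = [&& a < N, b < N & c < N]%N.
Proof.
apply/idP/idP.
  case/allpairsP => [[[u v] z] /= [/allpairsP [[u' v'] /= [hu hv [-> ->]]] hz [-> -> ->]]].
  by move: hu hv hz; rewrite !mem_iota /= !add0n => -> -> ->.
case/and3P => ha hb hc; apply/allpairsP; exists ((a, b), c) => /=; split => //.
  by apply/allpairsP; exists (a, b); rewrite !mem_iota /= !add0n ha hb.
by rewrite mem_iota add0n.
Qed.

Lemma NS_eq F : NS_mult_frob 4 F =
  (fun i => mkS3 (nth (0, 0, 0)%N (TT F) i)) @` `I_(size (TT F)).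
Proof.
apply/seteqP; split.
  move=> S [hS [hm hf]].
  have [a [b [c [hk ES]]]] := NS_to_kunz S hS hm.
  have hf2 := mkS_frob a b c hk; rewrite -ES in hf2.
  have eF := frob_uniq S F _ hf hf2.
  have hv : valid F (a, b, c).
    rewrite /valid /= hk /=; move: hk; rewrite /kunz /Mx in eF * => hk; lia.
  have hin : (a, b, c) \in TT F.
    rewrite mem_filter hv mem_trip /=; move: hv; rewrite /valid /kunz /Mx /= => hv; lia.
  exists (index (a, b, c) (TT F)); first by rewrite /= index_mem.
  by rewrite nth_index // /mkS3 /= ES.
move=> S [i hi <-].
have hin : nth (0, 0, 0)%N (TT F) i \in TT F by rewrite mem_nth.
move: hin; rewrite mem_filter => /andP[hv _].
move: hv; case: (nth _ _ _) => [[a b] c] /andP[hk /eqP hM].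
rewrite /mkS3 /=; split; first exact: mkS_ns.
split; first exact: mkS_mult.
by have := mkS_frob a b c hk; rewrite /= hM addnK.
Qed.

Lemma NS_card F : NS_mult_frob 4 F #= `I_(size (TT F)).
Proof.
rewrite NS_eq; apply: inj_card_eq => i j hi hj /= e.
have u : uniq (TT F) by apply: filter_uniq; exact: uniq_trip.
apply/eqP; rewrite -(nth_uniq (0, 0, 0)%N _ _ u) //; apply/eqP.
move: e; rewrite /mkS3.
case: (nth _ _ i) => [[a b] c]; case: (nth _ _ j) => [[a' b'] c'] /= e.
by have [-> -> ->] := mkS_inj _ _ _ _ _ _ e.
  by apply/eqP; rewrite subn_eq0; move/set_mem: hi.
by apply/eqP; rewrite subn_eq0; move/set_mem: hj.
Qed.


Lemma count_allpairs (S T R : eqType) (f : S -> T -> R) (p : pred R) s t :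
  count p [seq f x y | x <- s, y <- t] = \sum_(x <- s) count (fun y => p (f x y)) t.
Proof.
elim: s => [|x s IH]; first by rewrite big_nil.
by rewrite allpairs_cons count_cat IH big_cons count_map.
Qed.

Lemma count_sum (T : eqType) (p : pred T) s : count p s = \sum_(x <- s) p x.
Proof. by elim: s => [|x s IH]; rewrite ?big_nil // big_cons /= IH. Qed.

Lemma sum_pick N K X : (K < N)%N -> \sum_(0 <= a < N) (if a == K then X else 0)%N = X.
Proof.
elim: N => [|N IH] hK //.
rewrite big_nat_recr //=.
case: (ltngtP K N) => h.
- rewrite IH //; case: (N =P K) => [e|_]; [lia | by rewrite addn0].
- lia.
- rewrite h; case: (N =P N) => // _; rewrite big1_seq // => a; rewrite mem_index_iota => /andP[_ ha].
  by case: eqP => // e; move: ha; rewrite e ltnn.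
Qed.

Lemma sum_interval N lo hi :
  \sum_(0 <= b < N) ((lo <= b) && (b <= hi))%N = minn hi.+1 N - lo.
Proof.
elim: N => [|N IH]; first by rewrite big_geq // minn0.
rewrite big_nat_recr //= IH; lia.
Qed.

Lemma restrict N l h (g : nat -> nat) : (h < N)%N ->
  \sum_(0 <= a < N) (if (l <= a <= h)%N then g a else 0)%N = \sum_(l <= a < h.+1) g a.
Proof.
move=> hN.
case: (leqP l h.+1) => hl; last first.
  rewrite (big_geq (m := l)); last exact: ltnW.
  by rewrite big1_seq // => a; rewrite mem_index_iota; case: ifP => //; lia.
have h0 : (0 <= l)%N by [].
rewrite (big_cat_nat h0 (leq_trans hl hN)) /= (big_cat_nat hl hN) /=.
have z1 : \sum_(0 <= a < l) (if (l <= a <= h)%N then g a else 0)%N = 0%N.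
  by rewrite big1_seq // => a; rewrite mem_index_iota; case: ifP => //; lia.
have z2 : \sum_(h.+1 <= a < N) (if (l <= a <= h)%N then g a else 0)%N = 0%N.
  by rewrite big1_seq // => a; rewrite mem_index_iota; case: ifP => //; lia.
rewrite z1 z2 add0n addn0; apply: eq_big_nat => a ha; case: ifP => //; lia.
Qed.

Lemma core2 N L U (lo hi : nat -> nat) : (U < N)%N -> (forall a, hi a < N)%N ->
  \sum_(0 <= a < N) \sum_(0 <= b < N) ((L <= a <= U) && ((lo a <= b) && (b <= hi a)) : nat)
  = \sum_(L <= a < U.+1) ((hi a).+1 - lo a).
Proof.
move=> hU hhi.
rewrite -(restrict N L U _ hU); apply: eq_bigr => a _.
case: ifP => hA /=.
  by rewrite sum_interval; have := hhi a; lia.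
by rewrite big1.
Qed.

Lemma W3 N K (V : nat -> nat -> nat -> bool) (P : nat -> nat -> bool) : (K < N)%N ->
  (forall a b c, V a b c = (c == K) && P a b) ->
  \sum_(0 <= a < N) \sum_(0 <= b < N) \sum_(0 <= c < N) (V a b c : nat)
  = \sum_(0 <= a < N) \sum_(0 <= b < N) (P a b : nat).
Proof.
move=> hK hV; apply: eq_bigr => a _; apply: eq_bigr => b _.
rewrite -(sum_pick N K (P a b) hK); apply: eq_bigr => c _; rewrite hV.
by case: (c == K).
Qed.

Lemma W2 N K (V : nat -> nat -> nat -> bool) (P : nat -> nat -> bool) : (K < N)%N ->
  (forall a b c, V a b c = (b == K) && P a c) ->
  \sum_(0 <= a < N) \sum_(0 <= b < N) \sum_(0 <= c < N) (V a b c : nat)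
  = \sum_(0 <= a < N) \sum_(0 <= c < N) (P a c : nat).
Proof.
move=> hK hV; apply: eq_bigr => a _.
rewrite -(sum_pick N K (\sum_(0 <= c < N) (P a c : nat)) hK); apply: eq_bigr => b _.
case: eqP => [->|hb]; first by apply: eq_bigr => c _; rewrite hV eqxx.
by rewrite big1 // => c _; rewrite hV; case: eqP.
Qed.

Lemma W1 N K (V : nat -> nat -> nat -> bool) (P : nat -> nat -> bool) : (K < N)%N ->
  (forall a b c, V a b c = (a == K) && P c b) ->
  \sum_(0 <= a < N) \sum_(0 <= b < N) \sum_(0 <= c < N) (V a b c : nat)
  = \sum_(0 <= c < N) \sum_(0 <= b < N) (P c b : nat).
Proof.
move=> hK hV.
rewrite -(sum_pick N K (\sum_(0 <= c < N) \sum_(0 <= b < N) (P c b : nat)) hK); apply: eq_bigr => a _.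
case: eqP => [->|ha].
  rewrite exchange_big; apply: eq_bigr => b _; apply: eq_bigr => c _; by rewrite hV eqxx.
by rewrite big1 // => b _; rewrite big1 // => c _; rewrite hV; case: eqP.
Qed.



Definition Cnt (F : nat) : nat :=
  \sum_(0 <= a < F + 1) \sum_(0 <= b < F + 1) \sum_(0 <= c < F + 1) (valid F (a, b, c) : nat).

Lemma size_TT F : size (TT F) = Cnt F.
Proof.
rewrite /TT size_filter /trip count_allpairs big_allpairs /Cnt /index_iota subn0.
apply: eq_bigr => a _; apply: eq_bigr => b _.
by rewrite count_sum.
Qed.


Local Open Scope ring_scope.


Definition PP (lo hi al be ga : nat) : rat :=
  (hi%:R - lo%:R) * (be%:R - ga%:R) + al%:R * ((hi%:R * (hi%:R - 1) - lo%:R * (lo%:R - 1)) / 2).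

Lemma splitS (g : nat -> nat) m n p : (m <= n)%N -> (n <= p)%N ->
  (\sum_(m <= i < p) g i = \sum_(m <= i < n) g i + \sum_(n <= i < p) g i)%N.
Proof. exact: big_cat_nat. Qed.

Lemma piece (lo hi : nat) (g : nat -> nat) (al be ga : nat) : (lo <= hi)%N ->
  (forall a, (lo <= a < hi)%N -> (g a + ga = al * a + be)%N) ->
  ((\sum_(lo <= a < hi) g a)%N%:R : rat) = PP lo hi al be ga.
Proof.
rewrite /PP.
elim: hi => [|h IH] hl hg.
  rewrite big_geq //; move: hl; rewrite leqn0 => /eqP ->; rewrite /=; field; done.
case: (leqP lo h) => hlh; last first.
  have -> : lo = h.+1 by lia.
  rewrite big_geq //; field; done.
rewrite big_nat_recr //= natrD IH //; last by move=> a ha; apply: hg; lia.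
have e := hg h (ltac:(lia)).
have -> : (g h)%:R = (al%:R * h%:R + be%:R - ga%:R : rat).
  by rewrite -natrM -natrD -e natrD addrK.
rewrite -addn1 natrD; field; done.
Qed.

Lemma cnt3 F K : (F + 1 = 4 * K)%N -> (1 <= K)%N ->
  (Cnt F)%:R = PP 1 ((K - 1) %/ 3 + 1) 0 0 0 + PP ((K - 1) %/ 3 + 1) (K %/ 2 + 1) 3 1 K
             + PP (K %/ 2 + 1) K 1 1 0 + PP K K.+1 0 K 0.
Proof.
move=> hF hK.
rewrite /Cnt (W3 (F + 1) K (fun a b c => valid F (a, b, c))
   (fun a b => (1 <= a <= K)%N && ((maxn 1 (K - a) <= b)%N && (b <= minn K (2 * a))%N))); last first.
  by move=> a b c; rewrite /valid /kunz /Mx /=; lia.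
  lia.
rewrite (core2 (F + 1) 1 K (fun a => maxn 1 (K - a)) (fun a => minn K (2 * a))); last first.
  by move=> a; lia.
  lia.
rewrite (splitS _ 1 ((K - 1) %/ 3 + 1) K.+1); try lia.
rewrite (splitS _ ((K - 1) %/ 3 + 1) (K %/ 2 + 1) K.+1); try lia.
rewrite (splitS _ (K %/ 2 + 1) K K.+1); try lia.
rewrite !natrD.
rewrite (piece _ _ _ 0 0 0); [| lia | by move=> a ha; lia].
rewrite (piece _ _ _ 3 1 K); [| lia | by move=> a ha; lia].
rewrite (piece _ _ _ 1 1 0); [| lia | by move=> a ha; lia].
rewrite (piece _ _ _ 0 K 0); [| lia | by move=> a ha; lia].
by rewrite !addrA.
Qed.

Lemma cnt2 F K : (F + 2 = 4 * K)%N -> (2 <= K)%N ->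
  (Cnt F)%:R = PP ((K + 1) %/ 2) K.+1 0 K (K %/ 2).
Proof.
move=> hF hK.
rewrite /Cnt (W2 (F + 1) K (fun a b c => valid F (a, b, c))
   (fun a c => ((K + 1) %/ 2 <= a <= K)%N && ((maxn 1 (K %/ 2) <= c)%N && (c <= K - 1)%N))); last first.
  by move=> a b c; rewrite /valid /kunz /Mx /=; lia.
  lia.
rewrite (core2 (F + 1) ((K + 1) %/ 2) K (fun a => maxn 1 (K %/ 2)) (fun a => K - 1)%N); last first.
  by move=> a; lia.
  lia.
rewrite (piece _ _ _ 0 K (K %/ 2)); [done | lia | by move=> a ha; lia].
Qed.

Lemma cnt1 F M : (F = 4 * M + 1)%N -> (1 <= M)%N ->
  (Cnt F)%:R = PP 1 ((M - 2) %/ 3 + 1) 0 0 0 + PP ((M - 2) %/ 3 + 1) ((M - 1) %/ 2 + 1) 3 2 M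
             + PP ((M - 1) %/ 2 + 1) M 1 1 0 + PP M M.+1 0 M 0.
Proof.
move=> hF hM.
rewrite /Cnt (W1 (F + 1) M.+1 (fun a b c => valid F (a, b, c))
   (fun c b => (1 <= c <= M)%N && ((maxn 1 (M - c) <= b)%N && (b <= minn M (2 * c + 1))%N))); last first.
  by move=> a b c; rewrite /valid /kunz /Mx /=; lia.
  lia.
rewrite (core2 (F + 1) 1 M (fun c => maxn 1 (M - c)) (fun c => minn M (2 * c + 1))); last first.
  by move=> a; lia.
  lia.
rewrite (splitS _ 1 ((M - 2) %/ 3 + 1) M.+1); try lia.
rewrite (splitS _ ((M - 2) %/ 3 + 1) ((M - 1) %/ 2 + 1) M.+1); try lia.
rewrite (splitS _ ((M - 1) %/ 2 + 1) M M.+1); try lia.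
rewrite !natrD.
rewrite (piece _ _ _ 0 0 0); [| lia | by move=> a ha; lia].
rewrite (piece _ _ _ 3 2 M); [| lia | by move=> a ha; lia].
rewrite (piece _ _ _ 1 1 0); [| lia | by move=> a ha; lia].
rewrite (piece _ _ _ 0 M 0); [| lia | by move=> a ha; lia].
by rewrite !addrA.
Qed.

Lemma cnt3v F K p1 p2 : (F + 1 = 4 * K)%N -> (1 <= K)%N -> p1 = ((K - 1) %/ 3)%N -> p2 = (K %/ 2)%N ->
  (Cnt F)%:R = PP 1 (p1 + 1) 0 0 0 + PP (p1 + 1) (p2 + 1) 3 1 K
             + PP (p2 + 1) K 1 1 0 + PP K (K + 1) 0 K 0.
Proof. by move=> h1 h2 -> ->; rewrite (cnt3 F K h1 h2) [(K + 1)%N]addn1. Qed.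

Lemma cnt2v F K x y : (F + 2 = 4 * K)%N -> (2 <= K)%N -> x = ((K + 1) %/ 2)%N -> y = (K %/ 2)%N ->
  (Cnt F)%:R = PP x (K + 1) 0 K y.
Proof. by move=> h1 h2 -> ->; rewrite (cnt2 F K h1 h2) [(K + 1)%N]addn1. Qed.

Lemma cnt1v F M p1 p2 : (F = 4 * M + 1)%N -> (1 <= M)%N -> p1 = ((M - 2) %/ 3)%N -> p2 = ((M - 1) %/ 2)%N ->
  (Cnt F)%:R = PP 1 (p1 + 1) 0 0 0 + PP (p1 + 1) (p2 + 1) 3 2 M
             + PP (p2 + 1) M 1 1 0 + PP M (M + 1) 0 M 0.
Proof. by move=> h1 h2 -> ->; rewrite (cnt1 F M h1 h2) [(M + 1)%N]addn1. Qed.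

Lemma cnt0 F : (F %% 4 = 0)%N -> Cnt F = 0%N.
Proof.
move=> h; rewrite /Cnt big1 // => a _; rewrite big1 // => b _; rewrite big1 // => c _.
by rewrite /valid /Mx /=; case: (kunz _ _ _) => //=; case: eqP => //; lia.
Qed.

Lemma final F : (3 <= F)%N -> (Cnt F)%:R = ns4_formula F.
Proof.
move=> hF.
have [m [r [hFm hr]]] : exists m r, F = (24 * m + r)%N /\ (r < 24)%N.
  by exists (F %/ 24)%N, (F %% 24)%N; split; lia.
have hrs : r = 0%N \/ r = 1%N \/ r = 2%N \/ r = 3%N \/ r = 4%N \/ r = 5%N \/ r = 6%N \/ r = 7%N \/ r = 8%N \/ r = 9%N \/ r = 10%N \/ r = 11%N \/ r = 12%N \/ r = 13%N \/ r = 14%N \/ r = 15%N \/ r = 16%N \/ r = 17%N \/ r = 18%N \/ r = 19%N \/ r = 20%N \/ r = 21%N \/ r = 22%N \/ r = 23%N by lia.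
case: hrs => [hr0|[hr0|[hr0|[hr0|[hr0|[hr0|[hr0|[hr0|[hr0|[hr0|[hr0|[hr0|[hr0|[hr0|[hr0|[hr0|[hr0|[hr0|[hr0|[hr0|[hr0|[hr0|[hr0|hr0]]]]]]]]]]]]]]]]]]]]]]]; subst r.
  - have h4 : (F %% 4 = 0)%N by lia.
    rewrite cnt0 // /ns4_formula.
    repeat (case: ifP => ?; try (exfalso; lia)).
    done.
  - rewrite (cnt1v F (6 * m + 0) (2 * m - 1) (3 * m - 1)); try lia.
    rewrite /ns4_formula.
    repeat (case: ifP => ?; try (exfalso; lia)).
    have E1 : ((F + 1) %/ 12 = 2 * m + 0)%N by lia.
    have E2 : ((F + 5) %/ 8 = 3 * m + 0)%N by lia.
    have E3 : ((F + 1) %/ 8 = 3 * m + 0)%N by lia.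
    have E4 : (F %/ 12 = 2 * m + 0)%N by lia.
    rewrite ?E1 ?E2 ?E3 ?E4 hFm /PP.
    rewrite ?natrD ?natrM ?natrB; try lia.
    field; done.
  - rewrite (cnt2v F (6 * m + 1) (3 * m + 1) (3 * m + 0)); try lia.
    rewrite /ns4_formula.
    repeat (case: ifP => ?; try (exfalso; lia)).
    have E1 : ((F + 1) %/ 12 = 2 * m + 0)%N by lia.
    have E2 : ((F + 5) %/ 8 = 3 * m + 0)%N by lia.
    have E3 : ((F + 1) %/ 8 = 3 * m + 0)%N by lia.
    have E4 : (F %/ 12 = 2 * m + 0)%N by lia.
    rewrite ?E1 ?E2 ?E3 ?E4 hFm /PP.
    rewrite ?natrD ?natrM ?natrB; try lia.
    field; done.
  - rewrite (cnt3v F (6 * m + 1) (2 * m + 0) (3 * m + 0)); try lia.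
    rewrite /ns4_formula.
    repeat (case: ifP => ?; try (exfalso; lia)).
    have E1 : ((F + 1) %/ 12 = 2 * m + 0)%N by lia.
    have E2 : ((F + 5) %/ 8 = 3 * m + 1)%N by lia.
    have E3 : ((F + 1) %/ 8 = 3 * m + 0)%N by lia.
    have E4 : (F %/ 12 = 2 * m + 0)%N by lia.
    rewrite ?E1 ?E2 ?E3 ?E4 hFm /PP.
    rewrite ?natrD ?natrM ?natrB; try lia.
    field; done.
  - have h4 : (F %% 4 = 0)%N by lia.
    rewrite cnt0 // /ns4_formula.
    repeat (case: ifP => ?; try (exfalso; lia)).
    done.
  - have [hm0|hm0] : m = 0%N \/ (1 <= m)%N by lia.
    - rewrite (cnt1v F (6 * m + 1) (2 * m - 1) (3 * m + 0)); try lia.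
      rewrite /ns4_formula.
      repeat (case: ifP => ?; try (exfalso; lia)).
      have E1 : ((F + 1) %/ 12 = 2 * m + 0)%N by lia.
      have E2 : ((F + 5) %/ 8 = 3 * m + 1)%N by lia.
      have E3 : ((F + 1) %/ 8 = 3 * m + 0)%N by lia.
      have E4 : (F %/ 12 = 2 * m + 0)%N by lia.
      rewrite ?E1 ?E2 ?E3 ?E4 hFm /PP.
      rewrite hm0 ?muln0 ?addn0 ?add0n ?sub0n.
      rewrite ?natrD ?natrM ?natrB; try lia.
      field; done.
    - rewrite (cnt1v F (6 * m + 1) (2 * m - 1) (3 * m + 0)); try lia.
      rewrite /ns4_formula.
      repeat (case: ifP => ?; try (exfalso; lia)).
      have E1 : ((F + 1) %/ 12 = 2 * m + 0)%N by lia.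
      have E2 : ((F + 5) %/ 8 = 3 * m + 1)%N by lia.
      have E3 : ((F + 1) %/ 8 = 3 * m + 0)%N by lia.
      have E4 : (F %/ 12 = 2 * m + 0)%N by lia.
      rewrite ?E1 ?E2 ?E3 ?E4 hFm /PP.
      rewrite ?natrD ?natrM ?natrB; try lia.
      field; done.
  - rewrite (cnt2v F (6 * m + 2) (3 * m + 1) (3 * m + 1)); try lia.
    rewrite /ns4_formula.
    repeat (case: ifP => ?; try (exfalso; lia)).
    have E1 : ((F + 1) %/ 12 = 2 * m + 0)%N by lia.
    have E2 : ((F + 5) %/ 8 = 3 * m + 1)%N by lia.
    have E3 : ((F + 1) %/ 8 = 3 * m + 0)%N by lia.
    have E4 : (F %/ 12 = 2 * m + 0)%N by lia.
    rewrite ?E1 ?E2 ?E3 ?E4 hFm /PP.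
    rewrite ?natrD ?natrM ?natrB; try lia.
    field; done.
  - rewrite (cnt3v F (6 * m + 2) (2 * m + 0) (3 * m + 1)); try lia.
    rewrite /ns4_formula.
    repeat (case: ifP => ?; try (exfalso; lia)).
    have E1 : ((F + 1) %/ 12 = 2 * m + 0)%N by lia.
    have E2 : ((F + 5) %/ 8 = 3 * m + 1)%N by lia.
    have E3 : ((F + 1) %/ 8 = 3 * m + 1)%N by lia.
    have E4 : (F %/ 12 = 2 * m + 0)%N by lia.
    rewrite ?E1 ?E2 ?E3 ?E4 hFm /PP.
    rewrite ?natrD ?natrM ?natrB; try lia.
    field; done.
  - have h4 : (F %% 4 = 0)%N by lia.
    rewrite cnt0 // /ns4_formula.
    repeat (case: ifP => ?; try (exfalso; lia)).
    done.
  - have [hm0|hm0] : m = 0%N \/ (1 <= m)%N by lia.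
    - rewrite (cnt1v F (6 * m + 2) (2 * m + 0) (3 * m + 0)); try lia.
      rewrite /ns4_formula.
      repeat (case: ifP => ?; try (exfalso; lia)).
      have E1 : ((F + 1) %/ 12 = 2 * m + 0)%N by lia.
      have E2 : ((F + 5) %/ 8 = 3 * m + 1)%N by lia.
      have E3 : ((F + 1) %/ 8 = 3 * m + 1)%N by lia.
      have E4 : (F %/ 12 = 2 * m + 0)%N by lia.
      rewrite ?E1 ?E2 ?E3 ?E4 hFm /PP.
      rewrite hm0 ?muln0 ?addn0 ?add0n ?sub0n.
      rewrite ?natrD ?natrM ?natrB; try lia.
      field; done.
    - rewrite (cnt1v F (6 * m + 2) (2 * m + 0) (3 * m + 0)); try lia.
      rewrite /ns4_formula.
      repeat (case: ifP => ?; try (exfalso; lia)).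
      have E1 : ((F + 1) %/ 12 = 2 * m + 0)%N by lia.
      have E2 : ((F + 5) %/ 8 = 3 * m + 1)%N by lia.
      have E3 : ((F + 1) %/ 8 = 3 * m + 1)%N by lia.
      have E4 : (F %/ 12 = 2 * m + 0)%N by lia.
      rewrite ?E1 ?E2 ?E3 ?E4 hFm /PP.
      rewrite ?natrD ?natrM ?natrB; try lia.
      field; done.
  - rewrite (cnt2v F (6 * m + 3) (3 * m + 2) (3 * m + 1)); try lia.
    rewrite /ns4_formula.
    repeat (case: ifP => ?; try (exfalso; lia)).
    have E1 : ((F + 1) %/ 12 = 2 * m + 0)%N by lia.
    have E2 : ((F + 5) %/ 8 = 3 * m + 1)%N by lia.
    have E3 : ((F + 1) %/ 8 = 3 * m + 1)%N by lia.
    have E4 : (F %/ 12 = 2 * m + 0)%N by lia.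
    rewrite ?E1 ?E2 ?E3 ?E4 hFm /PP.
    rewrite ?natrD ?natrM ?natrB; try lia.
    field; done.
  - rewrite (cnt3v F (6 * m + 3) (2 * m + 0) (3 * m + 1)); try lia.
    rewrite /ns4_formula.
    repeat (case: ifP => ?; try (exfalso; lia)).
    have E1 : ((F + 1) %/ 12 = 2 * m + 1)%N by lia.
    have E2 : ((F + 5) %/ 8 = 3 * m + 2)%N by lia.
    have E3 : ((F + 1) %/ 8 = 3 * m + 1)%N by lia.
    have E4 : (F %/ 12 = 2 * m + 0)%N by lia.
    rewrite ?E1 ?E2 ?E3 ?E4 hFm /PP.
    rewrite ?natrD ?natrM ?natrB; try lia.
    field; done.
  - have h4 : (F %% 4 = 0)%N by lia.
    rewrite cnt0 // /ns4_formula.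
    repeat (case: ifP => ?; try (exfalso; lia)).
    done.
  - have [hm0|hm0] : m = 0%N \/ (1 <= m)%N by lia.
    - rewrite (cnt1v F (6 * m + 3) (2 * m + 0) (3 * m + 1)); try lia.
      rewrite /ns4_formula.
      repeat (case: ifP => ?; try (exfalso; lia)).
      have E1 : ((F + 1) %/ 12 = 2 * m + 1)%N by lia.
      have E2 : ((F + 5) %/ 8 = 3 * m + 2)%N by lia.
      have E3 : ((F + 1) %/ 8 = 3 * m + 1)%N by lia.
      have E4 : (F %/ 12 = 2 * m + 1)%N by lia.
      rewrite ?E1 ?E2 ?E3 ?E4 hFm /PP.
      rewrite hm0 ?muln0 ?addn0 ?add0n ?sub0n.
      rewrite ?natrD ?natrM ?natrB; try lia.
      field; done.
    - rewrite (cnt1v F (6 * m + 3) (2 * m + 0) (3 * m + 1)); try lia.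
      rewrite /ns4_formula.
      repeat (case: ifP => ?; try (exfalso; lia)).
      have E1 : ((F + 1) %/ 12 = 2 * m + 1)%N by lia.
      have E2 : ((F + 5) %/ 8 = 3 * m + 2)%N by lia.
      have E3 : ((F + 1) %/ 8 = 3 * m + 1)%N by lia.
      have E4 : (F %/ 12 = 2 * m + 1)%N by lia.
      rewrite ?E1 ?E2 ?E3 ?E4 hFm /PP.
      rewrite ?natrD ?natrM ?natrB; try lia.
      field; done.
  - rewrite (cnt2v F (6 * m + 4) (3 * m + 2) (3 * m + 2)); try lia.
    rewrite /ns4_formula.
    repeat (case: ifP => ?; try (exfalso; lia)).
    have E1 : ((F + 1) %/ 12 = 2 * m + 1)%N by lia.
    have E2 : ((F + 5) %/ 8 = 3 * m + 2)%N by lia.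
    have E3 : ((F + 1) %/ 8 = 3 * m + 1)%N by lia.
    have E4 : (F %/ 12 = 2 * m + 1)%N by lia.
    rewrite ?E1 ?E2 ?E3 ?E4 hFm /PP.
    rewrite ?natrD ?natrM ?natrB; try lia.
    field; done.
  - rewrite (cnt3v F (6 * m + 4) (2 * m + 1) (3 * m + 2)); try lia.
    rewrite /ns4_formula.
    repeat (case: ifP => ?; try (exfalso; lia)).
    have E1 : ((F + 1) %/ 12 = 2 * m + 1)%N by lia.
    have E2 : ((F + 5) %/ 8 = 3 * m + 2)%N by lia.
    have E3 : ((F + 1) %/ 8 = 3 * m + 2)%N by lia.
    have E4 : (F %/ 12 = 2 * m + 1)%N by lia.
    rewrite ?E1 ?E2 ?E3 ?E4 hFm /PP.
    rewrite ?natrD ?natrM ?natrB; try lia.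
    field; done.
  - have h4 : (F %% 4 = 0)%N by lia.
    rewrite cnt0 // /ns4_formula.
    repeat (case: ifP => ?; try (exfalso; lia)).
    done.
  - have [hm0|hm0] : m = 0%N \/ (1 <= m)%N by lia.
    - rewrite (cnt1v F (6 * m + 4) (2 * m + 0) (3 * m + 1)); try lia.
      rewrite /ns4_formula.
      repeat (case: ifP => ?; try (exfalso; lia)).
      have E1 : ((F + 1) %/ 12 = 2 * m + 1)%N by lia.
      have E2 : ((F + 5) %/ 8 = 3 * m + 2)%N by lia.
      have E3 : ((F + 1) %/ 8 = 3 * m + 2)%N by lia.
      have E4 : (F %/ 12 = 2 * m + 1)%N by lia.
      rewrite ?E1 ?E2 ?E3 ?E4 hFm /PP.
      rewrite hm0 ?muln0 ?addn0 ?add0n ?sub0n.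
      rewrite ?natrD ?natrM ?natrB; try lia.
      field; done.
    - rewrite (cnt1v F (6 * m + 4) (2 * m + 0) (3 * m + 1)); try lia.
      rewrite /ns4_formula.
      repeat (case: ifP => ?; try (exfalso; lia)).
      have E1 : ((F + 1) %/ 12 = 2 * m + 1)%N by lia.
      have E2 : ((F + 5) %/ 8 = 3 * m + 2)%N by lia.
      have E3 : ((F + 1) %/ 8 = 3 * m + 2)%N by lia.
      have E4 : (F %/ 12 = 2 * m + 1)%N by lia.
      rewrite ?E1 ?E2 ?E3 ?E4 hFm /PP.
      rewrite ?natrD ?natrM ?natrB; try lia.
      field; done.
  - rewrite (cnt2v F (6 * m + 5) (3 * m + 3) (3 * m + 2)); try lia.
    rewrite /ns4_formula.
    repeat (case: ifP => ?; try (exfalso; lia)).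
    have E1 : ((F + 1) %/ 12 = 2 * m + 1)%N by lia.
    have E2 : ((F + 5) %/ 8 = 3 * m + 2)%N by lia.
    have E3 : ((F + 1) %/ 8 = 3 * m + 2)%N by lia.
    have E4 : (F %/ 12 = 2 * m + 1)%N by lia.
    rewrite ?E1 ?E2 ?E3 ?E4 hFm /PP.
    rewrite ?natrD ?natrM ?natrB; try lia.
    field; done.
  - rewrite (cnt3v F (6 * m + 5) (2 * m + 1) (3 * m + 2)); try lia.
    rewrite /ns4_formula.
    repeat (case: ifP => ?; try (exfalso; lia)).
    have E1 : ((F + 1) %/ 12 = 2 * m + 1)%N by lia.
    have E2 : ((F + 5) %/ 8 = 3 * m + 3)%N by lia.
    have E3 : ((F + 1) %/ 8 = 3 * m + 2)%N by lia.
    have E4 : (F %/ 12 = 2 * m + 1)%N by lia.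
    rewrite ?E1 ?E2 ?E3 ?E4 hFm /PP.
    rewrite ?natrD ?natrM ?natrB; try lia.
    field; done.
  - have h4 : (F %% 4 = 0)%N by lia.
    rewrite cnt0 // /ns4_formula.
    repeat (case: ifP => ?; try (exfalso; lia)).
    done.
  - rewrite (cnt1v F (6 * m + 5) (2 * m + 1) (3 * m + 2)); try lia.
    rewrite /ns4_formula.
    repeat (case: ifP => ?; try (exfalso; lia)).
    have E1 : ((F + 1) %/ 12 = 2 * m + 1)%N by lia.
    have E2 : ((F + 5) %/ 8 = 3 * m + 3)%N by lia.
    have E3 : ((F + 1) %/ 8 = 3 * m + 2)%N by lia.
    have E4 : (F %/ 12 = 2 * m + 1)%N by lia.
    rewrite ?E1 ?E2 ?E3 ?E4 hFm /PP.
    rewrite ?natrD ?natrM ?natrB; try lia.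
    field; done.
  - rewrite (cnt2v F (6 * m + 6) (3 * m + 3) (3 * m + 3)); try lia.
    rewrite /ns4_formula.
    repeat (case: ifP => ?; try (exfalso; lia)).
    have E1 : ((F + 1) %/ 12 = 2 * m + 1)%N by lia.
    have E2 : ((F + 5) %/ 8 = 3 * m + 3)%N by lia.
    have E3 : ((F + 1) %/ 8 = 3 * m + 2)%N by lia.
    have E4 : (F %/ 12 = 2 * m + 1)%N by lia.
    rewrite ?E1 ?E2 ?E3 ?E4 hFm /PP.
    rewrite ?natrD ?natrM ?natrB; try lia.
    field; done.
  - rewrite (cnt3v F (6 * m + 6) (2 * m + 1) (3 * m + 3)); try lia.
    rewrite /ns4_formula.
    repeat (case: ifP => ?; try (exfalso; lia)).
    have E1 : ((F + 1) %/ 12 = 2 * m + 2)%N by lia.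
    have E2 : ((F + 5) %/ 8 = 3 * m + 3)%N by lia.
    have E3 : ((F + 1) %/ 8 = 3 * m + 3)%N by lia.
    have E4 : (F %/ 12 = 2 * m + 1)%N by lia.
    rewrite ?E1 ?E2 ?E3 ?E4 hFm /PP.
    rewrite ?natrD ?natrM ?natrB; try lia.
    field; done.

Qed.

Local Close Scope ring_scope.

Theorem mainTheorem10 (F : nat) (hF : (3 <= F)%N) :
  exists n : nat, NS_mult_frob 4 F #= `I_n /\ (n%:R : rat) = ns4_formula F.
Proof.
exists (size (TT F)); split; first exact: NS_card.
by rewrite size_TT; apply: final.
Qed.
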